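(* Let $\mathbf a=(a_1,\dots,a_q)$ be a graceful permutation of length $q$. Suppose $\mathbf a$ has two adjacent entries $x$ and $y$ (in either order) with $x<y<2(y-x)$, and put $p=2(y-x)$. Then there is a graceful permutation of length $2p+q$ with first element $a_1+p$ and last element $a_q+p$.
   Context: A graceful permutation of length $n$ is an arrangement $(a_1,\dots,a_n)$ of the integers $\{0,1,\dots,n-1\}$ whose absolute differences $|a_{i+1}-a_i|$ ($1\le i\le n-1$) are exactly $\{1,\dots,n-1\}$. *)

(* Defs.v *)
From mathcomp Require Import all_boot.
Set Implicit Arguments. Unset Strict Implicit. Unset Printing Implicit Defensive.

Definition absdiff (m n : nat) : nat := (m - n) + (n - m).

Definition diffs (s : seq nat) : seq nat :=
  pairmap absdiff (head 0 s) (behead s).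

Definition graceful (n : nat) (s : seq nat) : Prop :=
  perm_eq s (iota 0 n) /\ perm_eq (diffs s) (iota 1 n.-1).

(* Main.v *)
Require Import Defs.
From mathcomp Require Import all_boot.
From mathcomp Require Import zify.

Lemma cover_perm (s : seq nat) a n : size s = n ->
  (forall v, a <= v < a + n -> v \in s) -> perm_eq s (iota a n).
Proof.
move=> sz cov.
have sub : {subset iota a n <= s} by move=> v; rewrite mem_iota => /cov.
have le : size s <= size (iota a n) by rewrite size_iota sz.
have [sz' eqi] := uniq_min_size (iota_uniq a n) sub le.
have us : uniq s by rewrite (uniq_size_uniq (iota_uniq a n) eqi) size_iota sz.
apply: uniq_perm; [exact: us | exact: iota_uniq | by move=> v; rewrite eqi].
Qed.

Lemma size_diffs s : size (diffs s) = (size s).-1.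
Proof. by case: s => //= x s; rewrite size_pairmap. Qed.

Lemma diffs_cat s1 s2 : s1 != [::] -> s2 != [::] ->
  diffs (s1 ++ s2) = diffs s1 ++ absdiff (last 0 s1) (head 0 s2) :: diffs s2.
Proof.
case: s1 => // x s1 _; case: s2 => // y s2 _.
by rewrite /diffs /= pairmap_cat.
Qed.

Lemma absdiffC u v : absdiff u v = absdiff v u.
Proof. by rewrite /absdiff addnC. Qed.

Lemma diffs_rev s : diffs (rev s) = rev (diffs s).
Proof.
elim: s => // x [|y t] IH //.
rewrite rev_cons -cats1 diffs_cat //; last by rewrite rev_cons; case: (rev t).
rewrite IH /= !rev_cons -!cats1 /= last_cat /= absdiffC.
by [].
Qed.


Definition pm (F : nat -> nat -> nat) s := pairmap F (head 0 s) (behead s).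
Definition pmb (F : nat -> nat -> bool) s := pairmap F (head 0 s) (behead s).

Lemma pm_cat F s1 s2 : s1 != [::] -> s2 != [::] ->
  pm F (s1 ++ s2) = pm F s1 ++ F (last 0 s1) (head 0 s2) :: pm F s2.
Proof.
case: s1 => // x s1 _; case: s2 => // y s2 _.
by rewrite /pm /= pairmap_cat.
Qed.

Lemma pmb_cat F s1 s2 : s1 != [::] -> s2 != [::] ->
  pmb F (s1 ++ s2) = pmb F s1 ++ F (last 0 s1) (head 0 s2) :: pmb F s2.
Proof.
case: s1 => // x s1 _; case: s2 => // y s2 _.
by rewrite /pmb /= pairmap_cat.
Qed.

Lemma pm_map (P : nat -> nat -> bool) F G f h s :
  all id (pmb P s) -> (forall u v, P u v -> F (f u) (f v) = h (G u v)) ->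
  pm F (map f s) = map h (pm G s).
Proof.
move=> A H; case: s A => // x t; rewrite /pm /pmb /=.
elim: t x => //= y t IH x /andP[Pxy rest].
by rewrite H // IH.
Qed.

Lemma pm_map_in F G f h s :
  {in s &, forall u v, F (f u) (f v) = h (G u v)} ->
  pm F (map f s) = map h (pm G s).
Proof.
case: s => // x t; rewrite /pm /=.
elim: t x => //= y t IH x H.
rewrite H ?inE ?eqxx ?orbT //; congr (_ :: _); apply: IH.
move=> u v Hu Hv; apply: H; by rewrite inE ?Hu ?Hv orbT.
Qed.

Lemma pmb_map_in F G f h s :
  {in s &, forall u v, F (f u) (f v) = h (G u v)} ->
  pmb F (map f s) = map h (pmb G s).
Proof.
case: s => // x t; rewrite /pmb /=.
elim: t x => //= y t IH x H.
rewrite H ?inE ?eqxx ?orbT //; congr (_ :: _); apply: IH.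
move=> u v Hu Hv; apply: H; by rewrite inE ?Hu ?Hv orbT.
Qed.

Lemma pmb_rev F s : (forall u v, F u v = F v u) -> pmb F (rev s) = rev (pmb F s).
Proof.
move=> FC; elim: s => // x [|y t] IH //.
rewrite rev_cons -cats1 pmb_cat //; last by rewrite rev_cons; case: (rev t).
rewrite IH /= !rev_cons -!cats1 /= last_cat /= FC.
by [].
Qed.

Lemma size_pm F s : size (pm F s) = (size s).-1.
Proof. by case: s => //= x s; rewrite size_pairmap. Qed.

Definition alt m s := all id (pmb (fun u v => (u < m) != (v < m)) s).

Fixpoint zig a b k := if k is k'.+1 then a :: b :: zig a.+1 b.-1 k' else [::].

Lemma size_zig a b k : size (zig a b k) = k.*2.
Proof. by elim: k a b => //= k IH a b; rewrite IH doubleS. Qed.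

Lemma mem_zig a b k v : k <= b.+1 ->
  (v \in zig a b k) = (a <= v < a + k) || ((b < v + k) && (v <= b)).
Proof.
elim: k a b => [|k IH] a b hk /=; first by rewrite in_nil; lia.
rewrite !inE IH; last by lia.
apply/idP/idP; lia.
Qed.

Lemma head_zig a b k : head 0 (zig a b k.+1) = a.
Proof. by []. Qed.

Lemma last_zig x a b k : last x (zig a b k.+1) = b - k.
Proof.
elim: k x a b => [|k IH] x a b; first by rewrite subn0.
have -> : zig a b k.+2 = a :: b :: zig a.+1 b.-1 k.+1 by [].
change (last b (zig a.+1 b.-1 k.+1) = b - k.+1); rewrite IH; lia.
Qed.

Lemma mem_diffs_zig a b k e : a + k.*2 < b ->
  (e \in diffs (zig a b k.+1)) = (b - a - k.*2 <= e <= b - a).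
Proof.
elim: k a b => [|k IH] a b hk.
  by rewrite /diffs /= inE /absdiff; apply/idP/idP; lia.
have -> : diffs (zig a b k.+2) = absdiff a b :: absdiff b a.+1 :: diffs (zig a.+1 b.-1 k.+1) by [].
have hk' : a.+1 + k.*2 < b.-1 by lia.
have IH' := IH a.+1 b.-1 hk'.
set D := diffs (zig a.+1 b.-1 k.+1) in IH' *.
rewrite (in_cons (absdiff a b)) (in_cons (absdiff b a.+1)) IH' /absdiff; apply/idP/idP; lia.
Qed.

Lemma alt_zig m a b k : a + k <= m -> m + k <= b.+1 -> alt m (zig a b k).
Proof.
case: k => [|k] //.
elim: k a b => [|k IH] a b h1 h2.
  by rewrite /alt /pmb /=; apply/andP; split => //; lia.
have h1' : a.+1 + k.+1 <= m by lia.
have h2' : m + k.+1 <= b.-1.+1 by lia.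
move: (IH a.+1 b.-1 h1' h2'); rewrite /alt /pmb /= => ->.
rewrite andbT; apply/andP; split; lia.
Qed.

Definition altg m c w := [/\ perm_eq w (iota 0 (2 * m)), perm_eq (diffs w) (iota 1 (2 * m).-1),
  head 0 w = c, last 0 w = c + m & alt m w].

Lemma alt_cat m s1 s2 : s1 != [::] -> s2 != [::] ->
  alt m (s1 ++ s2) = [&& alt m s1, ((last 0 s1 < m) != (head 0 s2 < m)) & alt m s2].
Proof. by move=> h1 h2; rewrite /alt pmb_cat // all_cat /=. Qed.

Lemma mem_diffs_cat e s1 s2 : s1 != [::] -> s2 != [::] ->
  (e \in diffs (s1 ++ s2)) = [|| e \in diffs s1, e == absdiff (last 0 s1) (head 0 s2) | e \in diffs s2].
Proof. by move=> h1 h2; rewrite diffs_cat // mem_cat in_cons. Qed.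

Lemma size_diffs' s : size (diffs s) = (size s).-1.
Proof. exact: size_diffs. Qed.

Lemma last_map0 (f : nat -> nat) s : s != [::] -> last 0 (map f s) = f (last 0 s).
Proof. by case: s => // x s _ /=; rewrite last_map. Qed.

Lemma head_map0 (f : nat -> nat) s : s != [::] -> head 0 (map f s) = f (head 0 s).
Proof. by case: s. Qed.

Lemma last_ne x y (s : seq nat) : s != [::] -> last x s = last y s.
Proof. by case: s. Qed.

Lemma head_rev0 s : head 0 (rev s) = last 0 s.
Proof. by case/lastP: s => // s x; rewrite rev_rcons last_rcons. Qed.

Lemma last_rev0 s : last 0 (rev s) = head 0 s.
Proof. by case: s => // x s; rewrite rev_cons last_rcons. Qed.

Lemma altg_nil m c w : 0 < m -> altg m c w -> w != [::].
Proof. by move=> hm [/perm_size]; case: w => //=; rewrite size_iota; lia. Qed.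

Lemma altg_base c : altg (2 * c + 1) c
  (if c is k.+1 then zig c (3 * c) c ++ [:: 2 * c; 4 * c + 1] ++ zig 0 (4 * c) c else [:: 0; 1]).
Proof.
case: c => [|k].
  split => //=; rewrite /alt /pmb //=.
set c := k.+1.
have nz1 : zig c (3 * c) c != [::] by [].
have nz2 : zig 0 (4 * c) c != [::] by [].
have nz3 : [:: 2 * c; 4 * c + 1] ++ zig 0 (4 * c) c != [::] by [].
have sz : size (zig c (3 * c) c ++ [:: 2 * c; 4 * c + 1] ++ zig 0 (4 * c) c) = 2 * (2 * c + 1).
  by rewrite !size_cat !size_zig /=; lia.
split.
- apply: cover_perm => // v hv.
  rewrite !mem_cat !mem_zig ?inE; try lia.
- apply: cover_perm; first by rewrite size_diffs sz.
  move=> e he.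
  rewrite mem_diffs_cat // mem_diffs_cat //.
  rewrite /c !mem_diffs_zig; try lia.
  rewrite last_zig /=.
  move: he; rewrite /c => he.
  have -> : diffs [:: 2 * k.+1; 4 * k.+1 + 1] = [:: absdiff (2*k.+1) (4*k.+1+1)] by [].
  rewrite inE /absdiff; lia.
- by [].
- rewrite !last_cat /c last_zig; lia.
- rewrite alt_cat // alt_cat // !alt_zig; try (rewrite /c; lia).
  rewrite /c last_zig /= /alt /pmb /=; apply/and3P; split; lia.
Qed.

Definition shiftf c t (v : nat) := if v < c then v else v + 2 * t.

Lemma altg_step m c t w : t = m - c -> 0 < t -> t <= c -> c < m ->
  altg c (c - t) w ->
  altg m c (zig c (m + t - 1) t ++ map (shiftf c t) w).
Proof.
move=> ht t0 tc cm; case: t ht t0 tc => [//|t'] ht _ tc [pv pd hh hl ha].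
have c0 : 0 < c by lia.
have wn : w != [::] := @altg_nil c (c - t'.+1) w c0 (And5 pv pd hh hl ha).
have zn : zig c (m + t'.+1 - 1) t'.+1 != [::] by [].
have mn : map (shiftf c t'.+1) w != [::] by rewrite -size_eq0 size_map size_eq0.
have sz : size (zig c (m + t'.+1 - 1) t'.+1 ++ map (shiftf c t'.+1) w) = 2 * m.
  by rewrite size_cat size_zig size_map (perm_size pv) size_iota; lia.
have Lz : last 0 (zig c (m + t'.+1 - 1) t'.+1) = m.
  by rewrite last_zig; lia.
have Hw : forall v, (v \in w) = (v < 2 * c) by move=> v; rewrite (perm_mem pv) mem_iota.
have Hd : forall e, (e \in diffs w) = (0 < e < 2 * c) by move=> e; rewrite (perm_mem pd) mem_iota; lia.
have Dm : diffs (map (shiftf c t'.+1) w) = map (addn (2 * t'.+1)) (diffs w).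
  apply: (@pm_map (fun u v => (u < c) != (v < c))) => // u v.
  rewrite /shiftf /absdiff; case: ifP => hu; case: ifP => hv; lia.
split.
- apply: cover_perm => // v hv.
  rewrite mem_cat mem_zig; last by lia.
  case: (ltnP v c) => hvc.
    apply/orP; right; have <- : shiftf c t'.+1 v = v by rewrite /shiftf hvc.
    by apply: map_f; rewrite Hw; lia.
  case: (ltnP v (m + t'.+1)) => hvm; first by apply/orP; left; lia.
  apply/orP; right; have <- : shiftf c t'.+1 (v - 2 * t'.+1) = v by rewrite /shiftf; case: ifP; lia.
  by apply: map_f; rewrite Hw; lia.
- apply: cover_perm; first by rewrite size_diffs sz.
  move=> e he; rewrite mem_diffs_cat // Lz head_map0 // hh Dm.
  case: (ltnP e (2 * t'.+1 + 1)) => het.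
    rewrite mem_diffs_zig; last by lia.
    rewrite /shiftf; case: ifP => h; rewrite /absdiff; apply/orP; lia.
  apply/orP; right; apply/orP; right.
  have <- : 2 * t'.+1 + (e - 2 * t'.+1) = e by lia.
  by apply: map_f; rewrite Hd; lia.
- by [].
- rewrite last_cat (@last_ne _ 0 _ mn) last_map0 // hl /shiftf; case: ifP; lia.
- rewrite alt_cat // Lz head_map0 // hh.
  rewrite alt_zig; try lia.
  rewrite /alt (@pmb_map_in _ (fun u v => (u < c) != (v < c)) _ id).
    rewrite map_id; move: ha; rewrite /alt => ->.
    rewrite /shiftf; case: ifP; lia.
  move=> u v _ _; rewrite /shiftf; case: ifP => hu; case: ifP => hv; lia.
Qed.

Lemma altg_rc m c w : c < m -> altg m c w ->
  altg m (m - 1 - c) (map (fun v => 2 * m - 1 - v) (rev w)).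
Proof.
move=> cm [pv pd hh hl ha].
have wn : w != [::] := @altg_nil m c w ltac:(lia) (And5 pv pd hh hl ha).
have rn : rev w != [::] by rewrite -size_eq0 size_rev size_eq0.
have Hw : forall v, (v \in w) = (v < 2 * m) by move=> v; rewrite (perm_mem pv) mem_iota.
set K := fun v => 2 * m - 1 - v.
have Hin : {in rev w &, forall u v, absdiff (K u) (K v) = id (absdiff u v)}.
  by move=> u v; rewrite !mem_rev !Hw /K /absdiff /= => hu hv; lia.
split.
- apply: cover_perm; first by rewrite size_map size_rev (perm_size pv) size_iota.
  move=> v hv; have <- : K (2 * m - 1 - v) = v by rewrite /K; lia.
  by apply: map_f; rewrite mem_rev Hw; lia.
- have -> : diffs (map K (rev w)) = map id (diffs (rev w)) by apply: pm_map_in.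
  by rewrite map_id diffs_rev perm_rev.
- by rewrite head_map0 // head_rev0 hl /K; lia.
- by rewrite last_map0 // last_rev0 hh /K; lia.
- rewrite /alt (@pmb_map_in _ (fun u v => (u < m) != (v < m)) _ id).
    rewrite map_id pmb_rev ?all_rev //.
    by move=> u v; case: (u < m); case: (v < m).
  by move=> u v; rewrite !mem_rev !Hw /K /= => hu hv; case: (ltnP u m) => h1; case: (ltnP v m) => h2; case: (ltnP (2 * m - 1 - u) m) => h3; case: (ltnP (2 * m - 1 - v) m) => h4; lia.
Qed.

Lemma altg_exists n : forall m c, m <= n -> c < m -> exists w, altg m c w.
Proof.
elim: n => [|n IH] m c hn hc; first by lia.
have K1 : forall c, c < m -> m <= 2 * c + 1 -> exists w, altg m c w.
  move=> c' hc' hm.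
  case: (ltnP (2 * c') m) => h2.
    have -> : m = 2 * c' + 1 by lia.
    by eexists; apply: altg_base.
  have [w hw] := IH c' (c' - (m - c')) ltac:(lia) ltac:(lia).
  eexists; apply: (@altg_step m c' (m - c') w erefl); try lia; exact: hw.
case: (leqP m (2 * c + 1)) => h; first exact: K1.
have [w hw] := K1 (m - 1 - c) ltac:(lia) ltac:(lia).
have := @altg_rc m (m - 1 - c) w ltac:(lia) hw.
have -> : m - 1 - (m - 1 - c) = c by lia.
by move=> H; exists (map (fun v => 2 * m - 1 - v) (rev w)).
Qed.

Lemma diffs_shift p s : diffs (map (fun v => v + p) s) = diffs s.
Proof.
rewrite -[RHS]map_id; apply: pm_map_in => u v _ _ /=; rewrite /absdiff; lia.
Qed.

Lemma head_cat0 (s1 s2 : seq nat) : s1 != [::] -> head 0 (s1 ++ s2) = head 0 s1.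
Proof. by case: s1. Qed.

Lemma insert_lemma q a i p W :
  graceful q a -> i.+1 < q -> W != [::] -> size W = 2 * p ->
  (forall v, (v < p) || (p + q <= v < 2 * p + q) -> v \in W) ->
  (forall e, q < e < q + 2 * p -> e \in diffs W) ->
  (let l1 := absdiff (nth 0 a i + p) (head 0 W) in
   let l2 := absdiff (last 0 W) (nth 0 a i.+1 + p) in
   let d := absdiff (nth 0 a i) (nth 0 a i.+1) in
   (l1 = d /\ l2 = q) \/ (l1 = q /\ l2 = d)) ->
  let b := map (fun v => v + p) (take i.+1 a) ++ W ++ map (fun v => v + p) (drop i.+1 a) in
  [/\ graceful (2 * p + q) b, head 0 b = head 0 a + p & last 0 b = last 0 a + p].
Proof.
move=> [pa pd] iq Wn szW memW dW hl b.
have sa : size a = q by rewrite (perm_size pa) size_iota.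
have tn : take i.+1 a != [::] by rewrite -size_eq0 size_take sa; case: ifP => _; lia.
have dn : drop i.+1 a != [::] by rewrite -size_eq0 size_drop sa; lia.
have A1n : map (fun v => v + p) (take i.+1 a) != [::] by rewrite -size_eq0 size_map size_eq0.
have A2n : map (fun v => v + p) (drop i.+1 a) != [::] by rewrite -size_eq0 size_map size_eq0.
have WA2n : W ++ map (fun v => v + p) (drop i.+1 a) != [::] by case: (W) Wn.
have lt : last 0 (take i.+1 a) = nth 0 a i.
  rewrite (last_nth 0) size_take; case: ifP => h; last by lia.
  rewrite -/(nth 0 (0 :: take i.+1 a) i.+1) /= nth_take //.
have hd : head 0 (drop i.+1 a) = nth 0 a i.+1 by rewrite -nth0 nth_drop addn0.
have sb : size b = 2 * p + q.
  rewrite /b !size_cat !size_map size_take size_drop szW; case: ifP; lia.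
have Da : diffs a = diffs (take i.+1 a) ++ absdiff (nth 0 a i) (nth 0 a i.+1) :: diffs (drop i.+1 a).
  by rewrite -{1}(cat_take_drop i.+1 a) diffs_cat // lt hd.
have Ma : forall v, (v \in a) = (v < q) by move=> v; rewrite (perm_mem pa) mem_iota.
have Md : forall e, (e \in diffs a) = (0 < e < q) by move=> e; rewrite (perm_mem pd) mem_iota; lia.
split; first split.
- apply: cover_perm => // v hv.
  rewrite /b !mem_cat.
  case: (boolP ((v < p) || (p + q <= v < 2 * p + q))) => hv'.
    by rewrite (memW v hv') orbT.
  have : v - p \in a by rewrite Ma; lia.
  have E : v - p + p = v by lia.
  rewrite -{1}(cat_take_drop i.+1 a) mem_cat => /orP [h|h].
    by apply/orP; left; rewrite -E; apply: (map_f (fun v => v + p)).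
  by apply/orP; right; apply/orP; right; rewrite -E; apply: (map_f (fun v => v + p)).
- apply: cover_perm; first by rewrite size_diffs sb.
  move=> e he.
  rewrite /b mem_diffs_cat // mem_diffs_cat // !diffs_shift.
  rewrite last_map0 // lt head_map0 // hd.
  have -> : head 0 (W ++ map (fun v => v + p) (drop i.+1 a)) = head 0 W by case: (W) Wn.
  case: (ltnP e q) => heq.
    have : e \in diffs a by rewrite Md; lia.
    rewrite Da mem_cat in_cons => /or3P [h|/eqP h|h].
    + by rewrite h.
    + move: hl => /=; rewrite -h; case=> [[-> _]|[_ ->]]; by rewrite eqxx ?orbT.
    + by rewrite h !orbT.
  case: (ltnP q e) => heq'.
    by rewrite dW ?orbT //; lia.
  have -> : e = q by lia.
  move: hl => /=; case=> [[_ ->]|[-> _]]; by rewrite eqxx ?orbT.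
- by rewrite /b head_cat0 // head_map0 // -!nth0 nth_take.
- rewrite /b !last_cat (@last_ne _ 0 _ A2n) last_map0 //.
  by rewrite -[in RHS](cat_take_drop i.+1 a) last_cat (@last_ne _ 0 _ dn).
Qed.

Lemma W1_props p q c w : 0 < p -> c < p -> altg p c w ->
  let W1 := map (fun v => if v < p then v else v + q) w in
  [/\ W1 != [::], size W1 = 2 * p,
      forall v, (v < p) || (p + q <= v < 2 * p + q) -> v \in W1,
      forall e, q < e < q + 2 * p -> e \in diffs W1
      & head 0 W1 = c /\ last 0 W1 = c + p + q].
Proof.
move=> p0 cp [pv pd hh hl ha] W1.
have wn : w != [::] := @altg_nil p c w p0 (And5 pv pd hh hl ha).
have Hw : forall v, (v \in w) = (v < 2 * p) by move=> v; rewrite (perm_mem pv) mem_iota.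
have Hd : forall e, (e \in diffs w) = (0 < e < 2 * p) by move=> e; rewrite (perm_mem pd) mem_iota; lia.
have Dm : diffs W1 = map (addn q) (diffs w).
  apply: (@pm_map (fun u v => (u < p) != (v < p))) => // u v.
  rewrite /absdiff; case: ifP => hu; case: ifP => hv; lia.
split.
- by rewrite -size_eq0 size_map size_eq0.
- by rewrite size_map (perm_size pv) size_iota.
- move=> v hv; case: (ltnP v p) => h.
    have E : (if v < p then v else v + q) = v by rewrite h.
    by rewrite -E; apply: (map_f (fun v => if v < p then v else v + q)); rewrite Hw; lia.
  have E : (if v - q < p then v - q else v - q + q) = v by case: ifP; lia.
  by rewrite -E; apply: (map_f (fun v => if v < p then v else v + q)); rewrite Hw; lia.
- move=> e he; rewrite Dm.
  have <- : q + (e - q) = e by lia.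
  by apply: map_f; rewrite Hd; lia.
- split; first by rewrite head_map0 // hh cp.
  by rewrite last_map0 // hl; case: ifP; lia.
Qed.

Theorem theorem5p6 (q : nat) (a : seq nat) (i x y : nat) :
  0 < q ->
  graceful q a ->
  i.+1 < q ->
  ((x = nth 0 a i /\ y = nth 0 a i.+1) \/ (y = nth 0 a i /\ x = nth 0 a i.+1)) ->
  x < y -> y < 2 * (y - x) ->
  let p := 2 * (y - x) in
  exists b : seq nat,
    graceful (2 * p + q) b /\
    head 0 b = head 0 a + p /\
    last 0 b = last 0 a + p.
Proof.
move=> q0 ga iq hxy xy y2 p.
have p0 : 0 < p by rewrite /p; lia.
have cp : x + (y - x) < p by rewrite /p; lia.
have [w hw] := @altg_exists p p (x + (y - x)) (leqnn p) cp.
have [W1n W1s W1m W1d [W1h W1l]] := @W1_props p q _ w p0 cp hw.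
set W1 := map _ w in W1n W1s W1m W1d W1h W1l.
case: hxy => [[ex ey]|[ey ex]].
- have hl : let l1 := absdiff (nth 0 a i + p) (head 0 W1) in
   let l2 := absdiff (last 0 W1) (nth 0 a i.+1 + p) in
   let d := absdiff (nth 0 a i) (nth 0 a i.+1) in
   (l1 = d /\ l2 = q) \/ (l1 = q /\ l2 = d).
    left; rewrite /= W1h W1l -ex -ey /absdiff /p; lia.
  have [g hb lb] := @insert_lemma q a i p W1 ga iq W1n W1s W1m W1d hl.
  by exists (map (fun v => v + p) (take i.+1 a) ++ W1 ++ map (fun v => v + p) (drop i.+1 a)).
- have Rn : rev W1 != [::] by rewrite -size_eq0 size_rev size_eq0.
  have Rs : size (rev W1) = 2 * p by rewrite size_rev.
  have Rm : forall v, (v < p) || (p + q <= v < 2 * p + q) -> v \in rev W1.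
    by move=> v hv; rewrite mem_rev; apply: W1m.
  have Rd : forall e, q < e < q + 2 * p -> e \in diffs (rev W1).
    by move=> e he; rewrite diffs_rev mem_rev; apply: W1d.
  have hl : let l1 := absdiff (nth 0 a i + p) (head 0 (rev W1)) in
   let l2 := absdiff (last 0 (rev W1)) (nth 0 a i.+1 + p) in
   let d := absdiff (nth 0 a i) (nth 0 a i.+1) in
   (l1 = d /\ l2 = q) \/ (l1 = q /\ l2 = d).
    right; rewrite /= head_rev0 last_rev0 W1h W1l -ex -ey /absdiff /p; lia.
  have [g hb lb] := @insert_lemma q a i p (rev W1) ga iq Rn Rs Rm Rd hl.
  by exists (map (fun v => v + p) (take i.+1 a) ++ rev W1 ++ map (fun v => v + p) (drop i.+1 a)).
Qed.
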